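(* Let $d\ge 1$ be an integer and let $G$ be a graph that is closed in the $d$-rigidity matroid. Suppose $A,B$ are disjoint vertex subsets each of which induces a clique in $G$, and suppose $G$ contains a matching of $\binom{d+1}{2}$ edges each having one endpoint in $A$ and the other in $B$. Then $A\cup B$ induces a clique in $G$.
   Context: Fix $n$ and a generic $\mathbf p:[n]\to\mathbb R^d$ (its $dn$ coordinates algebraically independent over $\mathbb Q$). For $x\ne y\in[n]$, let $\mathbf r_{xy}\in\mathbb R^{dn}$ be the vector with $(\mathbf p(x)-\mathbf p(y))^T$ in the $d$ coordinates of $x$, $(\mathbf p(y)-\mathbf p(x))^T$ in the $d$ coordinates of $y$, and $0$ elsewhere. The $d$-rigidity closure of a graph $G$ on $[n]$ is the graph $C_d(G)$ with edge set $\{f\in\binom{[n]}2: \mathbf r_f\in\operatorname{span}_{\mathbb R}(\mathbf r_e: e\in G)\}$ (independent of the generic $\mathbf p$). $G$ is closed in the $d$-rigidity matroid if $C_d(G)=G$. *)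

(* Defs.v *)
From HB Require Import structures.
From mathcomp Require Import all_boot all_order all_algebra.
From mathcomp Require Import Rstruct.
From mathcomp Require Import mpoly.

Set Implicit Arguments. Unset Strict Implicit. Unset Printing Implicit Defensive.
Import GRing.Theory Num.Theory.
Local Open Scope ring_scope.

(* A configuration p : [n] -> R^d is an n x d real matrix: row v is p(v). *)

(* Genericity: the d*n coordinates of p are algebraically independent over Q,
   i.e. no nonzero rational multivariate polynomial vanishes at them. *)
Definition generic_config (n d : nat) (p : 'M[Rdefinitions.R]_(n, d)) : Prop :=
  forall P : {mpoly rat[n * d]}, P != 0 ->
    mmap ratr (fun k : 'I_(n * d) => mxvec p 0 k) P != 0.

(* The rigidity vector r_xy in R^{dn} (arranged as an n x d matrix):
   row x is p(x)-p(y), row y is p(y)-p(x), other rows are 0. *)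
Definition rig_vec (n d : nat) (p : 'M[Rdefinitions.R]_(n, d)) (x y : 'I_n) : 'M[Rdefinitions.R]_(n, d) :=
  \matrix_(v, i) (if v == x then p x i - p y i
                  else if v == y then p y i - p x i else 0).

Definition simple_graph (n : nat) (G : rel 'I_n) : Prop :=
  (forall x y, G x y = G y x) /\ (forall x, ~~ G x x).

Definition in_rig_span (n d : nat) (p : 'M[Rdefinitions.R]_(n, d)) (G : rel 'I_n) (x y : 'I_n) : bool :=
  (mxvec (rig_vec p x y) <= \sum_(e : 'I_n * 'I_n | G e.1 e.2) <<mxvec (rig_vec p e.1 e.2)>>)%MS.

Definition rig_closure (n d : nat) (p : 'M[Rdefinitions.R]_(n, d)) (G : rel 'I_n) : rel 'I_n :=
  fun x y => (x != y) && in_rig_span p G x y.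

Definition rig_closed (n d : nat) (p : 'M[Rdefinitions.R]_(n, d)) (G : rel 'I_n) : Prop :=
  forall x y, rig_closure p G x y = G x y.

Definition is_clique (n : nat) (G : rel 'I_n) (S : {set 'I_n}) : Prop :=
  forall x y, x \in S -> y \in S -> x != y -> G x y.

(* Main.v *)
Require Import Defs.
From HB Require Import structures.
From mathcomp Require Import all_boot all_order all_algebra.
From mathcomp Require Import Rstruct.
From mathcomp Require Import mpoly.
From mathcomp Require Import ring lra.
Import GRing.Theory Num.Theory.

Local Open Scope ring_scope.

Local Notation RR := Rdefinitions.R.
Local Notation ev W := (mmap (ratr : rat -> RR) (fun k => mxvec W 0 k)).


Lemma evX n d (W : 'M[RR]_(n,d)) v k : ev W ('X_(mxvec_index v k)) = W v k.
Proof. by rewrite mmapX mmap1U mxvecE. Qed.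

Lemma gram_rowfree m c (K : 'M[RR]_(m,c)) : row_free K -> row_free (K *m K^T).
Proof.
move=> HK; rewrite -kermx_eq0; apply/eqP/row_matrixP => i; rewrite row0.
set x := row i _.
have H0 : x *m (K *m K^T) = 0 by rewrite /x -row_mul mulmx_ker row0.
set y := x *m K.
have Hy : y *m y^T = 0 by rewrite /y trmx_mul mulmxA -(mulmxA x) H0 mul0mx.
have Ydef : y = x *m K by [].
clearbody y.
have y0 : y = 0.
  apply/rowP => j; rewrite mxE.
  have := congr1 (fun M : 'M[RR]_1 => M 0 0) Hy; rewrite !mxE => Hs.
  have {}Hs : \sum_k y 0 k * y 0 k = 0.
    by rewrite -[RHS]Hs; apply: eq_bigr => k _; rewrite mxE.
  have Hp : forall k, predT k -> 0 <= y 0 k * y 0 k.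
    by move=> k _; rewrite -expr2 sqr_ge0.
  have := @psumr_eq0P _ _ predT (fun k => y 0 k * y 0 k) Hp Hs j isT.
  by move=> /eqP; rewrite mulf_eq0 orbb => /eqP ->.
by apply: (row_free_inj HK); rewrite /= mul0mx -Ydef.
Qed.

Lemma rowfree_mulr m c c' (A : 'M[RR]_(m,c)) (B : 'M_(c,c')) :
  row_free (A *m B) -> row_free A.
Proof.
rewrite /row_free => /eqP H; rewrite eqn_leq rank_leq_row /=.
by rewrite -{1}H mxrankM_maxl.
Qed.

Lemma generic_rowfree n d (p W : 'M[RR]_(n,d)) m c
  (KP : 'M[{mpoly rat[n*d]}]_(m,c)) :
  generic_config p -> row_free (map_mx (ev W) KP) -> row_free (map_mx (ev p) KP).
Proof.
move=> gen HW; set P := \det (KP *m KP^T).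
have HP : P != 0.
  apply/eqP => P0; have := @gram_rowfree _ _ _ HW.
  by rewrite row_free_unit unitmxE unitfE map_trmx -map_mxM det_map_mx -/P P0 rmorph0 eqxx.
have := gen P HP => HpP.
apply: (@rowfree_mulr _ _ _ _ (map_mx (ev p) KP)^T).
by rewrite row_free_unit unitmxE unitfE map_trmx -map_mxM det_map_mx -/P.
Qed.

Definition Eu {n d} (p U : 'M[RR]_(n,d)) (x y : 'I_n) : 'M[RR]_1 :=
  (row x U - row y U) *m (row x p - row y p)^T.

Lemma rig_vec_outer n d (p : 'M[RR]_(n,d)) x y :
  rig_vec p x y = (delta_mx 0 x - delta_mx 0 y)^T *m (row x p - row y p).
Proof.
apply/matrixP => v i; rewrite !mxE big_ord1 !mxE eqxx /=.
have [->|vx] := eqVneq v x.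
  have [->|xy] := eqVneq x y; first by rewrite subrr mulr0.
  by rewrite subr0 mul1r.
rewrite sub0r; case: (v =P y) => [vy|vy].
  by rewrite mulN1r opprB.
by rewrite mulr0n oppr0 mul0r.
Qed.

Lemma rig_dot n d (p U : 'M[RR]_(n,d)) x y :
  mxvec (rig_vec p x y) *m (mxvec U)^T = Eu p U x y.
Proof.
by rewrite rig_vec_outer mxvec_dotmul mulmxBl -!rowE.
Qed.

Lemma dual n d (p : 'M[RR]_(n,d)) (G : rel 'I_n) x y :
  (forall U : 'M_(n,d), (forall v w, G v w -> Eu p U v w = 0) -> Eu p U x y = 0) ->
  in_rig_span p G x y.
Proof.
move=> H; rewrite /in_rig_span submxE; set S := (\sum_(e | _) _)%MS.
apply/eqP/matrixP => i j; rewrite [RHS]mxE.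
set w := col j (cokermx S).
have Hw : forall v v', G v v' -> mxvec (rig_vec p v v') *m w = 0.
  move=> v v' Gvv'.
  have : (mxvec (rig_vec p v v') <= S)%MS.
    by apply: (sumsmx_sup (v, v')) => //; rewrite genmxE.
  by rewrite submxE => /eqP HS; rewrite /w colE mulmxA HS mul0mx.
have Hw' : forall v v', G v v' -> Eu p (vec_mx w^T) v v' = 0.
  by move=> v v' /Hw; rewrite -rig_dot vec_mxK trmxK.
have := H (vec_mx w^T) Hw'.
rewrite -rig_dot vec_mxK trmxK => Hxy.
by move: Hxy; rewrite /w colE mulmxA -colE => /matrixP /(_ i 0); rewrite !mxE.
Qed.


Lemma tr11 (A : 'M[RR]_1) : A^T = A.
Proof. by apply/matrixP => i j; rewrite !ord1 mxE. Qed.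

Lemma skew_quad d (M : 'M[RR]_d) (x : 'rV_d) : M^T = - M -> x *m M *m x^T = 0.
Proof.
move=> HM; set c := x *m M *m x^T.
have : c^T = - c by rewrite /c !trmx_mul trmxK HM mulNmx mulmxN mulmxA.
rewrite tr11 => Hc; clearbody c; apply/matrixP => i j; rewrite !ord1 mxE.
have := congr1 (fun A : 'M[RR]_1 => A 0 0) Hc; rewrite /= mxE; lra.
Qed.

Lemma subsub (V : zmodType) (a b c : V) : (a - c) - (b - c) = a - b.
Proof. by rewrite opprB addrA subrK. Qed.

Lemma bilin d (f1 f2 e1 e2 : 'rV[RR]_d) :
  (f1 - f2) *m (e1 - e2)^T = f1 *m e1^T - f1 *m e2^T - f2 *m e1^T + f2 *m e2^T.
Proof.
by rewrite linearB /= mulmxBl !mulmxBr opprB !addrA addrAC.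
Qed.

Lemma mulmx_tr_entry m d (x : 'rV[RR]_d) (A : 'M_(m,d)) j :
  (x *m A^T) 0 j = (x *m (row j A)^T) 0 0.
Proof. by rewrite !mxE; apply: eq_bigr => k _; rewrite !mxE. Qed.

Lemma clique_trivial n d (p U : 'M[RR]_(n,d)) (S : pred 'I_n) (q : 'I_d.+1 -> 'I_n) :
  (forall i, S (q i)) -> (forall v w, S v -> S w -> Eu p U v w = 0) ->
  (\matrix_(i < d) (row (q (lift ord0 i)) p - row (q ord0) p)) \in unitmx ->
  exists M : 'M_d, exists t : 'rV_d, M^T = - M /\
    forall v, S v -> row v U = row v p *m M + t.
Proof.
move=> Sq HS; set E := \matrix_(i < d) _ => Eu_.
set P0 := row (q ord0) p; set U0 := row (q ord0) U.
pose e v := row v p - P0; pose f v := row v U - U0.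
have Ha : forall v, S v -> f v *m (e v)^T = 0.
  by move=> v Sv; have := HS v (q ord0) Sv (Sq _).
have Hcross : forall v w, S v -> S w -> f v *m (e w)^T + f w *m (e v)^T = 0.
  move=> v w Sv Sw; have := HS v w Sv Sw.
  have -> : Eu p U v w = (f v - f w) *m (e v - e w)^T.
    by rewrite /Eu /f /e !subsub.
  rewrite bilin (Ha v Sv) (Ha w Sw) sub0r addr0 -opprD => /eqP.
  by rewrite oppr_eq0 => /eqP.
set F := \matrix_(i < d) f (q (lift ord0 i)).
have rowE_ : forall i, row i E = e (q (lift ord0 i)) by move=> i; rewrite rowK.
have rowF_ : forall i, row i F = f (q (lift ord0 i)) by move=> i; rewrite rowK.
set M := invmx E *m F.
have EM : E *m M = F by rewrite /M mulKVmx.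
have HFE : F *m E^T + E *m F^T = 0.
  apply/row_matrixP => i; rewrite row0 linearD /= !row_mul rowE_ rowF_.
  apply/rowP => j; rewrite [LHS]mxE [(_ *m E^T) 0 j]mulmx_tr_entry [(_ *m F^T) 0 j]mulmx_tr_entry rowE_ rowF_ mxE.
  rewrite -[e _ *m (f _)^T]tr11 trmx_mul trmxK.
  have := Hcross _ _ (Sq (lift ord0 i)) (Sq (lift ord0 j)).
  by move=> /matrixP /(_ 0 0); rewrite !mxE.
have Hskew : M^T = - M.
  have HM : M + M^T = invmx E *m (F *m E^T + E *m F^T) *m (invmx E)^T.
    rewrite mulmxDr mulmxDl; congr (_ + _).
      by rewrite !mulmxA -(mulmxA _ E^T) -trmx_mul mulVmx // trmx1 mulmx1.
    by rewrite /M trmx_mul mulKmx.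
  by move: HM; rewrite HFE mulmx0 mul0mx => /eqP; rewrite addrC addr_eq0 => /eqP.
exists M, (U0 - P0 *m M); split=> // v Sv.
apply/eqP; rewrite -subr_eq0; apply/eqP.
have -> : row v U - (row v p *m M + (U0 - P0 *m M)) = f v - e v *m M.
  rewrite /f /e mulmxBl; move: (row v p *m M) (P0 *m M) => a b.
  by apply/rowP => k; rewrite !mxE; ring.
set g := f v - e v *m M.
have Eg : E *m g^T = 0.
  apply/row_matrixP => i; rewrite row0 row_mul /g linearB /= trmx_mul Hskew.
  rewrite mulmxBr mulNmx mulmxN opprK (mulmxA _ M) -(row_mul i E M) EM rowE_ rowF_.
  rewrite -[e _ *m (f v)^T]tr11 trmx_mul trmxK.
  by have := Hcross _ _ Sv (Sq (lift ord0 i)).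
have : g^T = 0 by rewrite -(mulKmx Eu_ g^T) Eg mulmx0.
by move/(congr1 trmx); rewrite trmxK => ->; apply/matrixP => i j; rewrite !mxE.
Qed.


Definition XV {n d} (v : 'I_n) : 'rV[{mpoly rat[n*d]}]_d := \row_k 'X_(mxvec_index v k).

Lemma map_XV n d (W : 'M[RR]_(n,d)) v : map_mx (ev W) (XV v) = row v W.
Proof. by apply/rowP => k; rewrite !mxE evX. Qed.

Lemma affine_generic n d (p : 'M[RR]_(n,d)) (q : 'I_d.+1 -> 'I_n) :
  generic_config p -> injective q ->
  (\matrix_(i < d) (row (q (lift ord0 i)) p - row (q ord0) p)) \in unitmx.
Proof.
move=> gen qinj; rewrite -row_free_unit.
pose EP := \matrix_(i < d) (XV (q (lift ord0 i)) - XV (q ord0)) : 'M[{mpoly rat[n*d]}]_d.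
have mapE : forall W : 'M[RR]_(n,d),
    map_mx (ev W) EP = \matrix_(i < d) (row (q (lift ord0 i)) W - row (q ord0) W).
  by move=> W; apply/matrixP => i k; rewrite !mxE rmorphB /= !evX.
rewrite -mapE; apply: (@generic_rowfree n d p (\matrix_(v, l)
   (if [pick i | v == q (lift ord0 i)] is Some i then (i == l)%:R else 0 : RR)) _ _ EP) => //.
rewrite mapE row_free_unit; set I := \matrix_i _.
have -> : I = 1%:M.
  apply/matrixP => i l; rewrite !mxE.
  case: pickP => [i0 /eqP /qinj /lift_inj -> | H]; last by have := H i; rewrite /= eqxx.
  case: pickP => [i' /eqP /qinj H | _]; last by rewrite subr0.
  by move: (neq_lift ord0 i'); rewrite -H eqxx.
exact: unitmx1.
Qed.


Lemma map_lin_tr (aR rR : comRingType) (f : {rmorphism aR -> rR}) d :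
  map_mx f (lin_mx (@trmx aR d d)) = lin_mx (@trmx rR d d).
Proof.
apply/matrixP => i j; rewrite !mxE.
rewrite /= -[in RHS](map_delta_mx f) -map_vec_mx map_trmx -map_mxvec mxE.
by [].
Qed.

Lemma map_rows (aT rT : Type) (f : aT -> rT) m c (r : 'I_m -> 'rV[aT]_c) :
  map_mx f (\matrix_i r i) = \matrix_i map_mx f (r i).
Proof. by apply/matrixP => i j; rewrite !mxE. Qed.

Lemma mulmx_rows_tr_entry m c (x : 'rV[RR]_c) (r : 'I_m -> 'rV[RR]_c) i :
  (x *m (\matrix_i r i)^T) 0 i = (x *m (r i)^T) 0 0.
Proof. by rewrite mulmx_tr_entry rowK. Qed.

Definition KP {n d m} (a b : 'I_m -> 'I_n) : 'M[{mpoly rat[n*d]}]_(d*d + d, m + d*d) :=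
  block_mx (\matrix_(i < m) mxvec ((XV (b i))^T *m (XV (a i) - XV (b i))))^T
           (1%:M + lin_mx (@trmx _ d d))
           (\matrix_(i < m) (XV (a i) - XV (b i)))^T 0.

Lemma KP_sem n d m (a b : 'I_m -> 'I_n) (W : 'M[RR]_(n,d)) (D : 'M_d) (s : 'rV_d) :
  row_mx (mxvec D) s *m map_mx (ev W) (KP a b) =
  row_mx (\row_i (((row (b i) W *m D + s) *m (row (a i) W - row (b i) W)^T) 0 0))
         (mxvec (D + D^T)).
Proof.
rewrite /KP map_block_mx mul_row_block; congr row_mx.
  rewrite -!map_trmx !map_rows; apply/rowP => i.
  rewrite [LHS]mxE !mulmx_rows_tr_entry [RHS]mxE mulmxDl [RHS]mxE.
  congr (_ + _).
    rewrite map_mxvec map_mxM -map_trmx map_mxB !map_XV.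
    by rewrite -[mxvec D *m _]tr11 trmx_mul trmxK mxvec_dotmul.
  by rewrite map_mxB !map_XV.
rewrite map_mx0 mulmx0 addr0 map_mxD map_mx1 map_lin_tr mulmxDr mulmx1.
by rewrite mul_vec_lin linearD.
Qed.

Lemma pairs_surj d : exists phi : 'I_('C(d.+1,2)) -> 'I_d.+1 * 'I_d.+1,
  forall j k : 'I_d.+1, (j < k)%N -> exists i, phi i = (j, k).
Proof.
set T := [set t : 2.-tuple 'I_d.+1 | sorted ltn (map val t)].
have HT : #|T| = 'C(d.+1, 2) := card_ltn_sorted_tuples 2 d.+1.
exists (fun i => let t := enum_val (cast_ord (esym HT) i) in (tnth t ord0, tnth t (lift ord0 ord0))).
move=> j k jk.
have tT : [tuple j; k] \in T by rewrite inE /= jk.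
exists (cast_ord HT (enum_rank_in tT [tuple j; k])).
by rewrite /= cast_ordK (enum_rankK_in tT tT).
Qed.

Definition er {d} (x : 'I_d.+1) : 'rV[RR]_d := \row_l ((x == lift ord0 l)%:R).

Lemma er0 d : er (ord0 : 'I_d.+1) = 0.
Proof. by apply/rowP => l; rewrite !mxE (negbTE (neq_lift _ _)). Qed.

Lemma erS d (l : 'I_d) : er (lift ord0 l) = delta_mx 0 l.
Proof.
by apply/rowP => l'; rewrite !mxE (inj_eq lift_inj) eq_sym.
Qed.

Lemma dot_delta d (A : 'rV[RR]_d) (i : 'I_1) (k : 'I_d) : (A *m (delta_mx i k)^T) 0 0 = A 0 k.
Proof. by rewrite (ord1 i) trmx_delta -colE mxE. Qed.

Lemma mxE_sub m c (A B : 'M[RR]_(m,c)) i j : (A - B) i j = A i j - B i j.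
Proof. by rewrite !mxE. Qed.

Lemma witness_alg d (D : 'M[RR]_d) (s : 'rV_d) : D^T = -D ->
  (forall j k : 'I_d.+1, (j < k)%N -> ((er j *m D + s) *m (er k - er j)^T) 0 0 = 0) ->
  D = 0 /\ s = 0.
Proof.
move=> skew H.
have s0 : s = 0.
  apply/rowP => l; have := H ord0 (lift ord0 l) isT.
  by rewrite er0 mul0mx add0r subr0 erS dot_delta mxE.
split=> //; apply/matrixP => j k; rewrite mxE.
have diag : forall j, D j j = 0.
  move=> j'; have := congr1 (fun A : 'M[RR]_d => A j' j') skew.
  rewrite !mxE; lra.
have up : forall j k : 'I_d, (j < k)%N -> D j k = 0.
  move=> j' k' jk; have := H (lift ord0 j') (lift ord0 k').
  rewrite /= /bump !leq0n !add1n ltnS => /(_ jk).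
  rewrite s0 addr0 !erS linearB /= mulmxBr mxE_sub.
  by rewrite -!rowE !dot_delta !mxE diag subr0.
case: (ltngtP j k) => [jk|kj|/val_inj ->]; first exact: up.
  have := congr1 (fun A : 'M[RR]_d => A k j) skew.
  by rewrite !mxE (up _ _ kj) oppr0.
exact: diag.
Qed.

Lemma matching_generic n d (p : 'M[RR]_(n,d)) (a b : 'I_('C(d.+1,2)) -> 'I_n)
  (A B : {set 'I_n}) :
  generic_config p -> injective a -> injective b ->
  (forall i, a i \in A) -> (forall i, b i \in B) -> [disjoint A & B] ->
  forall (D : 'M_d) (s : 'rV_d), D^T = -D ->
  (forall i, (row (b i) p *m D + s) *m (row (a i) p - row (b i) p)^T = 0) ->
  D = 0 /\ s = 0.
Proof.
move=> gen ainj binj aA bB dAB.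
have [phi Hphi] := pairs_surj d.
pose W : 'M[RR]_(n,d) := \matrix_(v, l)
  (if [pick i | v == a i] is Some i then er (phi i).2 0 l
   else if [pick i | v == b i] is Some i then er (phi i).1 0 l else 0).
have Wa : forall i, row (a i) W = er (phi i).2.
  move=> i; apply/rowP => l; rewrite !mxE.
  case: pickP => [i' /eqP /ainj <- /=| H]; last by have := H i; rewrite /= eqxx.
  by rewrite mxE.
have Wb : forall i, row (b i) W = er (phi i).1.
  move=> i; apply/rowP => l; rewrite !mxE.
  case: pickP => [i' /eqP Hab| _].
    by have := disjointFr dAB (aA i'); rewrite -Hab bB.
  case: pickP => [i' /eqP /binj <- /=| H]; last by have := H i; rewrite /= eqxx.
  by rewrite mxE.
have rf : row_free (map_mx (ev W) (KP a b)).
  rewrite -kermx_eq0; apply/eqP/row_matrixP => r; rewrite row0.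
  set x := row r _.
  have Hx : x *m map_mx (ev W) (KP a b) = 0 by rewrite /x -row_mul mulmx_ker row0.
  rewrite -(hsubmxK x) -(vec_mxK (lsubmx x)) in Hx *.
  move: Hx; rewrite KP_sem -row_mx0 => /eq_row_mx [H1 H2].
  move: (vec_mx (lsubmx x)) (rsubmx x) H1 H2 => D s H1 H2.
  have skew : D^T = - D.
    by move/eqP: H2; rewrite mxvec_eq0 addrC addr_eq0 => /eqP.
  have H1' : forall j k : 'I_d.+1, (j < k)%N ->
      ((er j *m D + s) *m (er k - er j)^T) 0 0 = 0.
    move=> j k jk; have [i phii] := Hphi j k jk.
    have := congr1 (fun M : 'rV[RR]_('C(d.+1,2)) => M 0 i) H1.
    by rewrite !mxE Wa Wb phii.
  have [-> ->] := witness_alg _ _ _ skew H1'.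
  by rewrite linear0 row_mx0.
have rfp := @generic_rowfree _ _ p _ _ _ _ gen rf.
move=> D s skew Heq.
have : row_mx (mxvec D) s *m map_mx (ev p) (KP a b) = 0 *m map_mx (ev p) (KP a b).
  rewrite KP_sem skew subrr linear0 mul0mx -row_mx0; congr row_mx.
  by apply/rowP => i; rewrite [LHS]mxE Heq !mxE.
move/(row_free_inj rfp); rewrite -row_mx0 => /eq_row_mx [/eqP].
by rewrite mxvec_eq0 => /eqP.
Qed.


Lemma clique_motion n d (p U : 'M[RR]_(n,d)) (S : {set 'I_n})
  (a : 'I_('C(d.+1,2)) -> 'I_n) :
  (0 < d)%N -> generic_config p -> injective a -> (forall i, a i \in S) ->
  (forall v w, v \in S -> w \in S -> Eu p U v w = 0) ->
  exists M : 'M_d, exists t : 'rV_d, M^T = - M /\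
    forall v, v \in S -> row v U = row v p *m M + t.
Proof.
move=> d0 gen ainj aS HS.
case: (leqP d.+1 #|S|) => [hS | hS].
  pose q (i : 'I_d.+1) : 'I_n := enum_val (widen_ord hS i).
  have qinj : injective q.
    by move=> i j /enum_val_inj /(congr1 val) /= /val_inj.
  have qS : forall i, q i \in S by move=> i; exact: enum_valP.
  apply: (@clique_trivial n d p U (fun v => v \in S) q) => //.
  exact: affine_generic.
have C0 : (0 < 'C(d.+1, 2))%N by rewrite bin_gt0.
have CS : ('C(d.+1, 2) <= #|S|)%N.
  have <- : #|a @: [set: 'I_('C(d.+1,2))]| = 'C(d.+1, 2).
    by rewrite card_imset // cardsT card_ord.
  by apply: subset_leq_card; apply/subsetP => _ /imsetP [i _ ->].
have S1 : (#|S| <= 1)%N.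
  move: CS hS; rewrite binS bin1 ltnS => h1 h2.
  have : ('C(d, 2) == 0)%N by rewrite -(eqn_add2r d) add0n eqn_leq (leq_trans h1 h2) leq_addl.
  rewrite -leqn0 leqNgt bin_gt0 -ltnNge => d2.
  by apply: leq_trans h2 _; rewrite -ltnS.
set i0 := Ordinal C0.
have Sa : forall v, v \in S -> v = a i0.
  move=> v vS; apply/eqP/negPn/negP => va.
  have : (#|[set v; a i0]| <= #|S|)%N.
    by apply: subset_leq_card; apply/subsetP => w; rewrite !inE => /orP [] /eqP ->.
  by rewrite cards2 va; move/leq_trans/(_ S1).
exists 0, (row (a i0) U); split; first by rewrite linear0 oppr0.
by move=> v /Sa ->; rewrite mulmx0 add0r.
Qed.

Theorem claim2p4 (n d : nat) (p : 'M[Rdefinitions.R]_(n, d)) (G : rel 'I_n)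
  (A B : {set 'I_n}) (a b : 'I_('C(d.+1, 2)) -> 'I_n) :
  (0 < d)%N ->
  generic_config p ->
  simple_graph G ->
  rig_closed p G ->
  [disjoint A & B] ->
  is_clique G A ->
  is_clique G B ->
  injective a -> injective b ->
  (forall i, a i \in A) -> (forall i, b i \in B) ->
  (forall i, G (a i) (b i)) ->
  is_clique G (A :|: B).
Proof.
move=> d0 gen sG cl dAB cA cB ainj binj aA bB Gab.
have cross : forall x y, x \in A -> y \in B -> G x y.
  move=> x y xA yB.
  have xy : x != y.
    by apply/eqP => exy; have := disjointFr dAB xA; rewrite exy yB.
  rewrite -cl /rig_closure xy /=; apply: dual => U HU.
  have EuS : forall S, is_clique G S ->
      forall v w, v \in S -> w \in S -> Eu p U v w = 0.
    move=> S cS v w vS wS; case: (eqVneq v w) => [->|vw].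
      by rewrite /Eu !subrr mul0mx.
    exact: HU (cS v w vS wS vw).
  have [MA [tA [skA HA]]] := @clique_motion _ _ p U A a d0 gen ainj aA (EuS A cA).
  have [MB [tB [skB HB]]] := @clique_motion _ _ p U B b d0 gen binj bB (EuS B cB).
  have [D0 s0] : MA - MB = 0 /\ tA - tB = 0.
    apply: (@matching_generic _ _ p a b A B gen ainj binj aA bB dAB).
      by rewrite linearB /= skA skB opprK addrC opprB.
    move=> i; have := HU _ _ (Gab i); rewrite /Eu (HA _ (aA i)) (HB _ (bB i)).
    have -> : row (a i) p *m MA + tA - (row (b i) p *m MB + tB) =
        (row (a i) p - row (b i) p) *m MA + (row (b i) p *m (MA - MB) + (tA - tB)).
      rewrite mulmxBl mulmxBr.
      move: (row (a i) p *m MA) (row (b i) p *m MA) (row (b i) p *m MB) => X Y Z.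
      by apply/rowP => k; rewrite !mxE; ring.
    by rewrite mulmxDl skew_quad // add0r.
  move: D0 s0 => /subr0_eq MAB /subr0_eq tAB.
  rewrite /Eu (HA _ xA) (HB _ yB) -MAB -tAB opprD addrACA subrr addr0 -mulmxBl.
  exact: skew_quad.
move=> x y; rewrite !inE => /orP [xA|xB] /orP [yA|yB] xy.
- exact: cA.
- exact: cross.
- by rewrite sG.1; apply: cross.
- exact: cB.
Qed.
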